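(* Let $\{x_k\}$ be the random sequence generated by the GSKM algorithm. Take $-1 < \xi \leq 0$ and $0 < \delta < \frac{2(1+\xi)}{1-2\xi}$. Define $\bar{x}_k = \frac{1}{k}\sum_{l=1}^{k} x_l$. Then $$\mathbb{E}[f(\bar{x}_k)] \leq \frac{(1+\xi)(1+\xi-2\delta\xi\mu_2)\, d(x_0,P)^2 + 2\xi\delta(\delta\xi-\delta-1) f(x_0)}{2\delta k(2+2\xi+2\delta\xi-\delta)}.$$
   Context: Linear feasibility problem $Ax \leq b$ with $A \in \mathbb{R}^{m\times n}$, $b \in \mathbb{R}^m$, assumed consistent, with rows $a_i^T$ normalized ($\|a_i\|=1$). $P = \{x : Ax \leq b\}$, $\mathcal{P}(x)$ the Euclidean projection onto $P$, $d(x,P) = \|x-\mathcal{P}(x)\|$. Sampling: at each iteration a set $\tau$ of $\beta$ rows is chosen uniformly at random among all $\binom{m}{\beta}$ subsets and $i^* = \arg\max_{i\in\tau}(a_i^Tx-b_i)^+$; $\mathbb{E}_{\mathbb{S}}$ denotes expectation over this sampling. $f(x) = \mathbb{E}_{\mathbb{S}}\big[\tfrac12|(a_{i^*}^Tx-b_{i^*})^+|^2\big]$. $\mu_2 = \min\{1, \frac{\beta}{m}\lambda_{\max}(A^TA)\}$. GSKM algorithm: $x_1 = x_0$, $z_1 = z_0$; for $k\ge1$, $z_k = x_k - \delta(a_{i^*}^Tx_k-b_{i^*})^+a_{i^*}$ (with $i^*$ chosen by the sampling rule at $x_k$) and $x_{k+1} = (1-\xi)z_k + \xi z_{k-1}$.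 *)

(* Defs.v *)
From HB Require Import structures.
From mathcomp Require Import all_boot all_order all_algebra.
From mathcomp Require Import classical_sets reals.
Set Implicit Arguments. Unset Strict Implicit. Unset Printing Implicit Defensive.
Import Order.TTheory GRing.Theory Num.Theory.
Local Open Scope ring_scope.

Section GSKM.
Variables (R : realType) (m n : nat).
Implicit Types (A : 'M[R]_(m, n)) (b : 'cV[R]_m) (x y : 'cV[R]_n).

Definition ppart (r : R) : R := Num.max r 0.

Definition resid A b (i : 'I_m) x : R := (A *m x) i 0 - b i 0.

Definition enorm x : R := Num.sqrt (\sum_j (x j 0) ^+ 2).

Definition feas A b : set 'cV[R]_n := [set y | forall i, (A *m y) i 0 <= b i 0].

Definition distP A b x : R := inf [set enorm (x - y) | y in feas A b].

Definition lmax A : R := sup [set a : R | eigenvalue (A^T *m A) a].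

Definition mu2 A (beta : nat) : R := Num.min 1 (beta%:R / m%:R * lmax A).

Definition is_argmax_sel A b (beta : nat)
  (sel : {set 'I_m} -> 'cV[R]_n -> 'I_m) : Prop :=
  forall (tau : {set 'I_m}) x, #|tau| = beta ->
    sel tau x \in tau /\
    forall i, i \in tau -> ppart (resid A b i x) <= ppart (resid A b (sel tau x) x).

Definition fobj A b (beta : nat) (sel : {set 'I_m} -> 'cV[R]_n -> 'I_m) x : R :=
  ('C(m, beta)%:R)^-1 *
  \sum_(tau : {set 'I_m} | #|tau| == beta)
     (2^-1 * (ppart (resid A b (sel tau x) x)) ^+ 2).

(** one GSKM step: from (x_k, z_{k-1}) and the sample tau_k to (x_{k+1}, z_k) *)
Definition gskm_step A b (sel : {set 'I_m} -> 'cV[R]_n -> 'I_m) (xi delta : R)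
  (tau : {set 'I_m}) (st : 'cV[R]_n * 'cV[R]_n) : 'cV[R]_n * 'cV[R]_n :=
  let: (xk, zprev) := st in
  let i := sel tau xk in
  let zk := xk - (delta * ppart (resid A b i xk)) *: (row i A)^T in
  ((1 - xi) *: zk + xi *: zprev, zk).

(** [gskm_state ... s j] = (x_{j+1}, z_j); sample tau_{j+1} = s j; x_1 = x_0, z_0 = x_0 *)
Fixpoint gskm_state A b sel (xi delta : R) (x0 : 'cV[R]_n)
  (s : nat -> {set 'I_m}) (j : nat) : 'cV[R]_n * 'cV[R]_n :=
  match j with
  | 0 => (x0, x0)
  | j'.+1 => gskm_step A b sel xi delta (s j') (gskm_state A b sel xi delta x0 s j')
  end.

Definition gskm_x A b sel xi delta x0 s (l : nat) : 'cV[R]_n :=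
  (gskm_state A b sel xi delta x0 s l.-1).1.   (* x_l for l >= 1 *)

Definition xbar A b sel xi delta x0 s (k : nat) : 'cV[R]_n :=
  (k%:R)^-1 *: \sum_(1 <= l < k.+1) gskm_x A b sel xi delta x0 s l.

Definition seq_of (k : nat) (t : {ffun 'I_k -> {set 'I_m}}) (j : nat) : {set 'I_m} :=
  oapp t finset.set0 (insub j).

(** E[ g(tau_1, ..., tau_k) ] with tau_l i.i.d. uniform among beta-subsets *)
Definition Eseq (beta k : nat) (g : (nat -> {set 'I_m}) -> R) : R :=
  (('C(m, beta) ^ k)%:R)^-1 *
  \sum_(t : {ffun 'I_k -> {set 'I_m}} | [forall i, #|t i| == beta]) g (seq_of t).

End GSKM.

(* Main.v *)
Require Import Defs.
From HB Require Import structures.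
From mathcomp Require Import all_boot all_order all_algebra.
From mathcomp Require Import classical_sets reals boolp.
From mathcomp Require Import ring lra.
Import Order.TTheory GRing.Theory Num.Theory.
Local Open Scope ring_scope.
Set Implicit Arguments. Unset Strict Implicit. Unset Printing Implicit Defensive.

Section Exp.
Variables (R : realType) (m beta : nat).
Local Notation T := {set 'I_m}.
Local Notation C := ('C(m, beta)).

Definition avg (phi : T -> R) : R := (C%:R)^-1 * \sum_(tau : T | #|tau| == beta) phi tau.

Definition upd (s : nat -> T) (k : nat) (tau : T) : nat -> T :=
  fun j => if j == k then tau else s j.

Definition extf k (p : {ffun 'I_k -> T} * T) : {ffun 'I_k.+1 -> T} :=
  [ffun i : 'I_k.+1 => oapp p.1 p.2 (insub (val i))].

Definition resf k (t : {ffun 'I_k.+1 -> T}) : {ffun 'I_k -> T} * T :=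
  ([ffun j : 'I_k => t (widen_ord (leqnSn k) j)], t ord_max).

Lemma extfK k : cancel (@extf k) (@resf k).
Proof.
case=> t tau; rewrite /resf /extf; congr pair.
  apply/ffunP => j; rewrite !ffunE /=.
  by rewrite (_ : insub (val j) = Some j) //; exact: valK.
by rewrite ffunE /= insubF // ltnn.
Qed.

Lemma resfK k : cancel (@resf k) (@extf k).
Proof.
move=> t; apply/ffunP => i; rewrite /extf /resf ffunE /=.
case: insubP => [u _ uE|].
  by rewrite /= ?ffunE; congr (t _); apply: val_inj; rewrite /= uE.
rewrite -leqNgt => ki; congr (t _); apply: val_inj => /=.
by apply/eqP; rewrite eqn_leq ki -ltnS ltn_ord.
Qed.

Lemma seq_of_extf k (p : {ffun 'I_k -> T} * T) :
  seq_of (extf p) = upd (seq_of p.1) k p.2.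
Proof.
apply: funext => j; rewrite /seq_of /upd.
case: insubP => [u uk uE|].
  rewrite /= /extf ffunE uE /=.
  case: insubP => [v vk vE|].
    by rewrite /= (ltn_eqF vk) ?ffunE /= ?vE; congr (p.1 _); apply: val_inj; rewrite /= ?uE ?vE.
  rewrite -leqNgt => kj; have -> : j == k by rewrite eqn_leq kj -ltnS uk.
  by [].
rewrite -leqNgt => kj.
have -> : (j == k) = false by apply/negbTE; rewrite neq_ltn kj orbT.
by rewrite insubF // ltnNge (leq_trans (leqnSn _) kj).
Qed.

Lemma extf_valid k (p : {ffun 'I_k -> T} * T) :
  [forall i, #|extf p i| == beta] = [forall j, #|p.1 j| == beta] && (#|p.2| == beta).
Proof.
apply/forallP/andP => [H|[/forallP H1 H2] i].
  split; last by move: (H ord_max); rewrite /extf ffunE /= insubF // ltnn.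
  apply/forallP => j; move: (H (widen_ord (leqnSn k) j)).
  by rewrite /extf ffunE /= (_ : insub (val j) = Some j) //; exact: valK.
rewrite /extf ffunE /=; case: insubP => [u _ _|_] /=; [exact: H1 | exact: H2].
Qed.

Lemma Eseq_S k (G : (nat -> T) -> R) :
  Eseq beta k.+1 G = Eseq beta k (fun s => avg (fun tau => G (upd s k tau))).
Proof.
rewrite /Eseq /avg.
rewrite (reindex (@extf k)); last first.
  by apply: onW_bij; exists (@resf k); [exact: (@extfK k) | exact: (@resfK k)].
rewrite (eq_bigl (fun p : {ffun 'I_k -> T} * T => [forall j, #|p.1 j| == beta] && (#|p.2| == beta)));
  last by move=> p; rewrite extf_valid.
rewrite (eq_bigr (fun p : {ffun 'I_k -> T} * T => G (upd (seq_of p.1) k p.2))); last first.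
  by move=> p _; rewrite seq_of_extf.
rewrite -(pair_big_dep (fun t : {ffun 'I_k -> T} => [forall j, #|t j| == beta])
   (fun _ (tau : T) => #|tau| == beta) (fun t (tau : T) => G (upd (seq_of t) k tau))) /=.
rewrite mulr_sumr [in RHS]mulr_sumr; apply: eq_bigr => t _.
rewrite mulrA; congr (_ * _).
by rewrite expnS natrM invfM mulrC.
Qed.

Lemma Eseq_0 (G : (nat -> T) -> R) : Eseq beta 0 G = G (fun _ => finset.set0).
Proof.
rewrite /Eseq expn0 invr1 mul1r.
have H : forall t : {ffun 'I_0 -> T}, t = [ffun i => finset.set0].
  by move=> t; apply/ffunP => -[].
rewrite (big_pred1 [ffun i : 'I_0 => finset.set0]); last first.
  move=> t; rewrite /= (H t) eqxx; apply/forallP => -[].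
  by [].
congr G; apply: funext => j; rewrite /seq_of; case: insubP => // -[].
Qed.

Hypothesis hbm : (beta <= m)%N.

Lemma avg_cst c : avg (fun _ => c) = c.
Proof.
rewrite /avg sumr_const.
have -> : #|[pred tau : T | #|tau| == beta]| = C.
  by rewrite -[in RHS](card_ord m) -(card_draws 'I_m beta) cardsE.
by rewrite -[c *+ _]mulr_natl mulrA mulVf ?mul1r // pnatr_eq0 -lt0n bin_gt0.
Qed.

Definition dep_lt (H : (nat -> T) -> R) (j : nat) :=
  forall s s', (forall i, (i < j)%N -> s i = s' i) -> H s = H s'.

Lemma Eseq_cst k c : @Eseq R m beta k (fun _ => c) = c.
Proof.
elim: k => [|k IH]; first by rewrite Eseq_0.
by rewrite Eseq_S (_ : (fun s => avg (fun _ => c)) = fun _ => c) //; apply: funext => s; rewrite avg_cst.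
Qed.

Lemma Eseq_indep H j K : dep_lt H j -> (j <= K)%N -> @Eseq R m beta K H = @Eseq R m beta j H.
Proof.
move=> dH /subnKC <-; elim: (K - j)%N => [|d IH]; first by rewrite addn0.
rewrite addnS Eseq_S -IH; congr (@Eseq R m beta _ _); apply: funext => s.
rewrite -[RHS]avg_cst; congr avg; apply: funext => tau; apply: dH => i hi.
rewrite /upd; case: eqP => // ei; move: hi; rewrite ei.
by rewrite ltnNge leq_addr.
Qed.

Lemma Eseq_last (phi : (nat -> T) -> T -> R) j :
  (forall tau, dep_lt (phi ^~ tau) j) ->
  @Eseq R m beta j.+1 (fun s => phi s (s j)) = @Eseq R m beta j (fun s => avg (phi s)).
Proof.
move=> dphi; rewrite Eseq_S; congr (@Eseq R m beta _ _); apply: funext => s.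
congr avg; apply: funext => tau; rewrite /upd eqxx; apply: dphi => i hi.
by rewrite (ltn_eqF hi).
Qed.

Lemma Eseq_sample (phi : (nat -> T) -> T -> R) j K :
  (j < K)%N -> (forall tau, dep_lt (phi ^~ tau) j) ->
  @Eseq R m beta K (fun s => phi s (s j)) = @Eseq R m beta K (fun s => avg (phi s)).
Proof.
move=> jK dphi.
rewrite (@Eseq_indep _ j.+1) //.
  etransitivity; first exact: (@Eseq_last phi j dphi).
  symmetry; apply: (@Eseq_indep _ j K) => //; last exact: ltnW.
  move=> s s' hs; congr avg; apply: funext => tau; exact: dphi.
move=> s s' hs; rewrite (hs j (ltnSn j)); apply: dphi => i hi; apply: hs.
exact: ltn_trans hi (ltnSn j).
Qed.

Lemma Eseq_le k (G1 G2 : (nat -> T) -> R) :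
  (forall t : {ffun 'I_k -> T}, [forall i, #|t i| == beta] -> G1 (seq_of t) <= G2 (seq_of t)) ->
  @Eseq R m beta k G1 <= @Eseq R m beta k G2.
Proof.
move=> H; rewrite /Eseq ler_wpM2l ?invr_ge0 ?ler0n //.
by apply: ler_sum => t /H.
Qed.

Lemma EseqD k (G1 G2 : (nat -> T) -> R) :
  @Eseq R m beta k (fun s => G1 s + G2 s) = @Eseq R m beta k G1 + @Eseq R m beta k G2.
Proof. by rewrite /Eseq big_split mulrDr. Qed.

Lemma EseqZ k c (G : (nat -> T) -> R) :
  @Eseq R m beta k (fun s => c * G s) = c * @Eseq R m beta k G.
Proof. by rewrite /Eseq -mulr_sumr mulrCA. Qed.

Lemma Eseq_sum k K (G : nat -> (nat -> T) -> R) :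
  @Eseq R m beta k (fun s => \sum_(l < K) G l s) = \sum_(l < K) @Eseq R m beta k (G l).
Proof.
rewrite /Eseq exchange_big mulr_sumr; apply: eq_bigr => l _ //.
Qed.

End Exp.
Section Jensen.
Variable R : realType.
Lemma ppart_ge0 (r : R) : 0 <= ppart r.
Proof. by rewrite /ppart le_max lexx orbT. Qed.

Lemma ppart_ge (r : R) : r <= ppart r.
Proof. by rewrite /ppart le_max lexx. Qed.

Lemma ppart_mul (r : R) : ppart r * r = ppart r ^+ 2.
Proof.
by rewrite /ppart; case: (lerP 0 r) => h; rewrite expr2 ?mul0r.
Qed.

Lemma ppart_le (r s : R) : r <= s -> ppart r <= ppart s.
Proof. by move=> h; rewrite /ppart; case: (lerP 0 r) => h1; case: (lerP 0 s) => h2 //; lra. Qed.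


Lemma sq_avg K (y : 'I_K -> R) : (0 < K)%N ->
  (K%:R^-1 * \sum_l y l) ^+ 2 <= K%:R^-1 * \sum_l y l ^+ 2.
Proof.
move=> K0; have hK : 0 < K%:R :> R by rewrite ltr0n.
set a := K%:R^-1 * \sum_l y l.
have e : \sum_l y l = K%:R * a by rewrite /a mulrA mulfV ?mul1r // gt_eqF.
have h : 0 <= \sum_l (y l - a) ^+ 2 by apply: sumr_ge0 => l _; exact: sqr_ge0.
rewrite (eq_bigr (fun l => y l ^+ 2 - (2 * a) * y l + a ^+ 2)) in h; last by move=> l _; ring.
rewrite big_split sumrB /= -mulr_sumr sumr_const card_ord e in h.
rewrite -(ler_pM2l hK) mulVKf ?gt_eqF //.
rewrite -mulr_natl in h.
clearbody a; nra.
Qed.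

Lemma ppart_avg K (y : 'I_K -> R) : (0 < K)%N ->
  ppart (K%:R^-1 * \sum_l y l) <= K%:R^-1 * \sum_l ppart (y l).
Proof.
move=> K0; have hK : 0 <= K%:R^-1 :> R by rewrite invr_ge0 ler0n.
have h1 : K%:R^-1 * \sum_l y l <= K%:R^-1 * \sum_l ppart (y l).
  by apply: ler_wpM2l => //; apply: ler_sum => l _; exact: ppart_ge.
have h2 : 0 <= K%:R^-1 * \sum_l ppart (y l).
  by apply: mulr_ge0 => //; apply: sumr_ge0 => l _; exact: ppart_ge0.
by rewrite {1}/ppart ge_max h1 h2.
Qed.
End Jensen.

Section Alg.
Variables (R : realType) (m n : nat) (A : 'M[R]_(m, n)) (b : 'cV[R]_m).
Hypothesis Anorm : forall i : 'I_m, \sum_j (A i j) ^+ 2 = 1.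

Definition ns (v : 'cV[R]_n) : R := \sum_j (v j 0) ^+ 2.

Lemma ns_ge0 v : 0 <= ns v.
Proof. by apply: sumr_ge0 => j _; rewrite sqr_ge0. Qed.

Lemma mulE (v : 'cV[R]_n) i : (A *m v) i 0 = \sum_j A i j * v j 0.
Proof. by rewrite mxE. Qed.

Lemma ns_step (x z p : 'cV[R]_n) (i : 'I_m) (xi c : R) :
  ns ((1 - xi) *: (x - c *: (row i A)^T) + xi *: z + xi *: (x - c *: (row i A)^T) - (1 + xi) *: p)
  = ns (x + xi *: z - (1 + xi) *: p)
    - 2 * c * ((A *m x) i 0 + xi * (A *m z) i 0 - (1 + xi) * (A *m p) i 0) + c ^+ 2.
Proof.
rewrite /ns !mulE.
have -> : \sum_j (((1 - xi) *: (x - c *: (row i A)^T) + xi *: z + xi *: (x - c *: (row i A)^T) - (1 + xi) *: p) j 0) ^+ 2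
  = \sum_j ((x + xi *: z - (1 + xi) *: p) j 0 ^+ 2 + - (2 * c * (A i j * x j 0 + xi * (A i j * z j 0) - (1 + xi) * (A i j * p j 0))) + c ^+ 2 * (A i j ^+ 2)).
  by apply: eq_bigr => j _; rewrite !mxE; ring.
rewrite big_split big_split /= -!mulr_sumr Anorm mulr1 sumrN.
rewrite -mulr_sumr; congr (_ - (_ * _) + _).
by rewrite big_split big_split /= sumrN -!mulr_sumr.
Qed.

Variables (beta : nat) (sel : {set 'I_m} -> 'cV[R]_n -> 'I_m) (xi delta : R) (p : 'cV[R]_n).
Hypotheses (hxi : -1 < xi) (hxi0 : xi <= 0) (hd : 0 < delta).
Hypothesis hp : forall i, (A *m p) i 0 <= b i 0.

Definition Wf (st : 'cV[R]_n * 'cV[R]_n) := ns (st.1 + xi *: st.2 - (1 + xi) *: p).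

Lemma step_ineq (x z : 'cV[R]_n) tau :
  Wf (gskm_step A b sel xi delta tau (x, z)) <=
  Wf (x, z) - 2 * delta * (ppart (resid A b (sel tau x) x)) ^+ 2
  + delta ^+ 2 * (ppart (resid A b (sel tau x) x)) ^+ 2
  - 2 * delta * xi * (ppart (resid A b (sel tau x) x) * resid A b (sel tau x) z).
Proof.
rewrite /Wf /gskm_step /=.
set i := sel tau x; set r := ppart (resid A b i x).
rewrite ns_step.
have h1 := ppart_mul (resid A b i x); rewrite -/r in h1.
have h2 : 0 <= r by exact: ppart_ge0.
have h3 : 0 <= b i 0 - (A *m p) i 0 by rewrite subr_ge0 hp.
have h4 : 0 <= delta * r * ((1 + xi) * (b i 0 - (A *m p) i 0)).
  have h5 : 0 <= 1 + xi by have := hxi; lra.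
  by rewrite !mulr_ge0 // ltW.
move: h1 h4; rewrite /resid => h1 h4.
have := hxi0; have := hd; nra.
Qed.


Lemma resid_step (x : 'cV[R]_n) i i' c :
  resid A b i (x - c *: (row i' A)^T) = resid A b i x - c * \sum_j A i j * A i' j.
Proof.
rewrite /resid !mulE.
rewrite (eq_bigr (fun j => A i j * x j 0 - c * (A i j * A i' j))); last first.
  by move=> j _; rewrite !mxE; ring.
by rewrite sumrB -mulr_sumr; ring.
Qed.

Lemma dot_ge (i i' : 'I_m) : -1 <= \sum_j A i j * A i' j.
Proof.
have : 0 <= \sum_j (A i j + A i' j) ^+ 2 by apply: sumr_ge0 => j _; exact: sqr_ge0.
rewrite (eq_bigr (fun j => A i j ^+ 2 + A i' j ^+ 2 + 2 * (A i j * A i' j))); last first.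
  by move=> j _; ring.
rewrite big_split big_split /= !Anorm -mulr_sumr => h; lra.
Qed.

Hypothesis hsel : is_argmax_sel A b beta sel.
Variable x0 : 'cV[R]_n.

Lemma resid_avg K (v : 'I_K -> 'cV[R]_n) i : (0 < K)%N ->
  resid A b i (K%:R^-1 *: \sum_l v l) = K%:R^-1 * \sum_l resid A b i (v l).
Proof.
move=> K0; have hK : K%:R != 0 :> R by rewrite pnatr_eq0 -lt0n.
rewrite /resid -scalemxAr mulmx_sumr mxE summxE sumrB sumr_const card_ord.
by rewrite mulrBr -[b i 0 *+ K]mulr_natl mulKf.
Qed.

Lemma fobj_avg K (v : 'I_K -> 'cV[R]_n) : (0 < K)%N ->
  fobj A b beta sel (K%:R^-1 *: \sum_l v l) <= K%:R^-1 * \sum_l fobj A b beta sel (v l).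
Proof.
move=> K0; rewrite /fobj.
set P := fun tau (x : 'cV[R]_n) => ppart (resid A b (sel tau x) x) ^+ 2.
have -> : K%:R^-1 * \sum_l ('C(m, beta)%:R^-1 * \sum_(tau : {set 'I_m} | #|tau| == beta) (2^-1 * P tau (v l)))
  = 'C(m, beta)%:R^-1 * \sum_(tau : {set 'I_m} | #|tau| == beta) (2^-1 * (K%:R^-1 * \sum_l P tau (v l))).
  transitivity (\sum_l \sum_(tau : {set 'I_m} | #|tau| == beta)
     (K%:R^-1 * 'C(m, beta)%:R^-1 * (2^-1 * P tau (v l)))).
    by rewrite mulr_sumr; apply: eq_bigr => l _; rewrite mulrA mulr_sumr.
  rewrite exchange_big mulr_sumr; apply: eq_bigr => tau _.
  rewrite (mulrA _ 2^-1) (mulrA _ K%:R^-1) mulr_sumr; apply: eq_bigr => l _; ring.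
apply: ler_wpM2l; first by rewrite invr_ge0 ler0n.
apply: ler_sum => tau /eqP htau.
apply: ler_wpM2l; first by rewrite invr_ge0; lra.
rewrite /P.
set vb := K%:R^-1 *: \sum_l v l.
set i := sel tau vb.
have hi : i \in tau by have [] := @hsel tau vb htau.
have hM : forall l, ppart (resid A b i (v l)) <= ppart (resid A b (sel tau (v l)) (v l)).
  by move=> l; have [_ ->] := @hsel tau (v l) htau.
have h1 : ppart (resid A b i vb) <= K%:R^-1 * \sum_l ppart (resid A b (sel tau (v l)) (v l)).
  rewrite /vb resid_avg //; apply: le_trans (ppart_avg _ K0) _.
  apply: ler_wpM2l; first by rewrite invr_ge0 ler0n.
  by apply: ler_sum => l _; exact: hM.
apply: le_trans (sq_avg _ K0).
rewrite ler_sqr ?nnegrE ?ppart_ge0 //.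
by apply: mulr_ge0; [rewrite invr_ge0 ler0n | apply: sumr_ge0 => l _; exact: ppart_ge0].
Qed.

Definition st (s : nat -> {set 'I_m}) j := gskm_state A b sel xi delta x0 s j.
Definition rr j s := ppart (resid A b (sel (s j) (st s j).1) (st s j).1).
Definition MM j s := ppart (resid A b (sel (s j) (st s j.-1).1) (st s j.-1).1).

Lemma stS s j : st s j.+1 = gskm_step A b sel xi delta (s j) (st s j).
Proof. by []. Qed.

Lemma Wstep0 s : Wf (st s 1) <= Wf (st s 0) - (2 * delta * (1 + xi) - delta ^+ 2) * rr 0 s ^+ 2.
Proof.
rewrite stS /= /rr /=.
apply: le_trans (step_ineq _ _ _) _.
rewrite ppart_mul.
set r2 := ppart _ ^+ 2; set W0 := Wf _.
have := hxi; lra.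
Qed.


Lemma step2 tau (stt : 'cV[R]_n * 'cV[R]_n) : (gskm_step A b sel xi delta tau stt).2 =
  stt.1 - (delta * ppart (resid A b (sel tau stt.1) stt.1)) *: (row (sel tau stt.1) A)^T.
Proof. by case: stt. Qed.

Lemma WstepS (s : nat -> {set 'I_m}) j : #|s j.+1| = beta ->
  Wf (st s j.+2) <= Wf (st s j.+1) - 2 * delta * rr j.+1 s ^+ 2 + delta ^+ 2 * rr j.+1 s ^+ 2
     - delta * xi * (rr j.+1 s ^+ 2 + MM j.+1 s ^+ 2 + delta * rr j.+1 s ^+ 2 + delta * rr j s ^+ 2).
Proof.
move=> hs.
have E1 : st s j.+2 = gskm_step A b sel xi delta (s j.+1) ((st s j.+1).1, (st s j.+1).2).
  by rewrite stS; case: (st s j.+1).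
rewrite E1; apply: le_trans (step_ineq _ _ _) _.
rewrite -/(rr j.+1 s).
have -> : Wf ((st s j.+1).1, (st s j.+1).2) = Wf (st s j.+1) by case: (st s j.+1).
set i := sel (s j.+1) (st s j.+1).1.
have hi : i \in s j.+1 by have [] := @hsel (s j.+1) (st s j.+1).1 hs.
have E2 : (st s j.+1).2 = (st s j).1 - (delta * rr j s) *: (row (sel (s j) (st s j).1) A)^T.
  by rewrite stS step2.
rewrite E2 resid_step.
have hM : resid A b i (st s j).1 <= MM j.+1 s.
  apply: le_trans (ppart_ge _) _; rewrite /MM /=.
  by have [_ ->] := @hsel (s j.+1) (st s j).1 hs.
have hS := dot_ge i (sel (s j) (st s j).1).
set S := \sum_j0 _ in hS *.
set r := rr j.+1 s in hM *; set r' := rr j s in hM *; set M := MM j.+1 s in hM *.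
set rx := resid A b i (st s j).1 in hM *.
have hr : 0 <= r by exact: ppart_ge0.
have hr' : 0 <= r' by exact: ppart_ge0.
have hdr : - (delta * r' * S) <= delta * r'.
  rewrite (_ : - (delta * r' * S) = (delta * r') * (- S)); last by ring.
  rewrite -[X in _ <= X]mulr1; apply: ler_wpM2l; first by rewrite mulr_ge0 // ltW.
  by rewrite lerNl.
have h1 : r * (rx - delta * r' * S) <= r * M + delta * r * r'.
  have h1' : rx - delta * r' * S <= M + delta * r' by apply: lerD hM hdr.
  have -> : r * M + delta * r * r' = r * (M + delta * r') by ring.
  by apply: ler_wpM2l.
have h2 : 2 * (r * M) <= r ^+ 2 + M ^+ 2 by have := sqr_ge0 (r - M); lra.
have h3 : 2 * (r * r') <= r ^+ 2 + r' ^+ 2 by have := sqr_ge0 (r - r'); lra.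
have e0 : 0 <= - (delta * xi) by have := hd; have := hxi0; nra.
clearbody r r' M rx S i.
have h4 : delta * (2 * (r * r')) <= delta * (r ^+ 2 + r' ^+ 2) by apply: ler_wpM2l => //; exact: ltW.
have hT : 2 * (r * (rx - delta * r' * S)) <= r ^+ 2 + M ^+ 2 + delta * r ^+ 2 + delta * r' ^+ 2 by lra.
have h5 : 0 <= (r ^+ 2 + M ^+ 2 + delta * r ^+ 2 + delta * r' ^+ 2) - 2 * (r * (rx - delta * r' * S)) by rewrite subr_ge0.
have := mulr_ge0 e0 h5.
lra.
Qed.


Lemma st_dep j (s s' : nat -> {set 'I_m}) : (forall i, (i < j)%N -> s i = s' i) -> st s j = st s' j.
Proof.
elim: j => [//|j IH] h; rewrite !stS IH ?h // => i hi; apply: h; exact: ltnW.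
Qed.


Hypothesis hbm : (beta <= m)%N.

Definition Fx (s : nat -> {set 'I_m}) j := fobj A b beta sel (st s j).1.

Lemma avg_fobj (x : 'cV[R]_n) :
  avg beta (fun tau => ppart (resid A b (sel tau x) x) ^+ 2) = 2 * fobj A b beta sel x.
Proof.
rewrite /avg /fobj -mulr_sumr mulrCA [2 * (_ * _)]mulrA mulfV ?mul1r //; apply/eqP => h; lra.
Qed.

Lemma E_rr K j : (j < K)%N ->
  Eseq beta K (fun s => rr j s ^+ 2) = 2 * Eseq beta K (fun s => Fx s j).
Proof.
move=> jK.
rewrite -EseqZ.
rewrite (@Eseq_sample R m beta hbm (fun s tau => ppart (resid A b (sel tau (st s j).1) (st s j).1) ^+ 2) j K jK).
  by congr Eseq; apply: funext => s; rewrite /Fx avg_fobj.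
by move=> tau s s' h; rewrite /= (st_dep h).
Qed.

Lemma E_MM K j : (j.+1 < K)%N ->
  Eseq beta K (fun s => MM j.+1 s ^+ 2) = 2 * Eseq beta K (fun s => Fx s j).
Proof.
move=> jK.
rewrite -EseqZ.
rewrite (@Eseq_sample R m beta hbm (fun s tau => ppart (resid A b (sel tau (st s j).1) (st s j).1) ^+ 2) j.+1 K jK).
  by congr Eseq; apply: funext => s; rewrite /Fx avg_fobj.
move=> tau s s' h; rewrite /= (@st_dep j s s') // => i hi; apply: h; exact: ltnW.
Qed.

Lemma seq_of_valid k (t : {ffun 'I_k -> {set 'I_m}}) j :
  [forall i, #|t i| == beta] -> (j < k)%N -> #|seq_of t j| = beta.
Proof.
move=> /forallP H jk; rewrite /seq_of; case: insubP => [u _ _|]; last by rewrite jk.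
by apply/eqP; exact: H.
Qed.


Definition EW K j := Eseq beta K (fun s => Wf (st s j)).
Definition EF K j := Eseq beta K (fun s => Fx s j).

Lemma inv_step K j : (j < K)%N ->
  EW K j.+1 + (- 2 * delta * xi) * (1 + delta) * EF K j
  + 2 * delta * (2 + 2 * xi + 2 * delta * xi - delta) * \sum_(l < j.+1) EF K l
  <= Wf (x0, x0) + (- 2 * delta * xi) * (1 - delta) * fobj A b beta sel x0.
Proof.
elim: j => [|j IH] jK.
  have h1 : EW K 1 <= Eseq beta K (fun s => Wf (st s 0) + (- (2 * delta * (1 + xi) - delta ^+ 2)) * rr 0 s ^+ 2).
    by apply: Eseq_le => t _; have := Wstep0 (seq_of t); lra.
  rewrite EseqD EseqZ E_rr // in h1.
  have e1 : Eseq beta K (fun s => Wf (st s 0)) = Wf (x0, x0).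
    have := Eseq_cst hbm K (Wf (x0, x0)). exact.
  have e2 : EF K 0 = fobj A b beta sel x0 by rewrite -(Eseq_cst hbm K (fobj A b beta sel x0)).
  rewrite e1 -/(EF K 0) e2 in h1.
  rewrite big_ord1 e2.
  lra.
have h1 : EW K j.+2 <= Eseq beta K (fun s => Wf (st s j.+1)
     + (- 2 * delta + delta ^+ 2 - delta * xi - delta ^+ 2 * xi) * rr j.+1 s ^+ 2
     + (- delta * xi) * MM j.+1 s ^+ 2 + (- delta ^+ 2 * xi) * rr j s ^+ 2).
  apply: Eseq_le => t ht; have := WstepS (seq_of_valid ht jK); lra.
rewrite !EseqD !EseqZ E_rr // E_rr ?(ltnW jK) // E_MM // in h1.
have IH' := IH (ltnW jK).
rewrite big_ord_recr /=.
rewrite -/(EW K j.+1) -/(EF K j.+1) -/(EF K j) in h1.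
lra.
Qed.


Lemma fobj_ge0 (x : 'cV[R]_n) : 0 <= fobj A b beta sel x.
Proof.
rewrite /fobj; apply: mulr_ge0; first by rewrite invr_ge0 ler0n.
apply: sumr_ge0 => tau _; apply: mulr_ge0; first by rewrite invr_ge0; lra.
exact: sqr_ge0.
Qed.

Lemma xbarE s K : xbar A b sel xi delta x0 s K = K%:R^-1 *: \sum_(l < K) (st s l).1.
Proof. by rewrite /xbar big_add1 /= big_mkord. Qed.

Lemma main_bound K : (0 < K)%N -> 0 < 2 + 2 * xi + 2 * delta * xi - delta ->
  Eseq beta K (fun s => fobj A b beta sel (xbar A b sel xi delta x0 s K))
  <= (Wf (x0, x0) + (- 2 * delta * xi) * (1 - delta) * fobj A b beta sel x0)
     / (2 * delta * K%:R * (2 + 2 * xi + 2 * delta * xi - delta)).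
Proof.
move=> K0 hD.
have hinv := @inv_step K K.-1 (eq_ind_r is_true K0 (ltn_predL K)).
rewrite prednK // in hinv.
have hEW : 0 <= EW K K by rewrite -(Eseq_cst hbm K 0); apply: Eseq_le => t _; exact: ns_ge0.
have hEF : 0 <= EF K K.-1 by rewrite -(Eseq_cst hbm K 0); apply: Eseq_le => t _; exact: fobj_ge0.
have he : 0 <= (- 2 * delta * xi) * (1 + delta) * EF K K.-1.
  apply: mulr_ge0 => //; apply: mulr_ge0; first by have := hd; have := hxi0; nra.
  by have := hd; lra.
set S := \sum_(l < K) EF K l in hinv.
set N := Wf (x0, x0) + _ in hinv *.
have h1 : Eseq beta K (fun s => fobj A b beta sel (xbar A b sel xi delta x0 s K))
          <= K%:R^-1 * S.
  rewrite /S /EF -(@Eseq_sum R m beta K K (fun l s => Fx s l)) -EseqZ; apply: Eseq_le => t _.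
  by rewrite xbarE; exact: fobj_avg.
apply: le_trans h1 _.
have hK : 0 < K%:R :> R by rewrite ltr0n.
have h2 : 2 * delta * (2 + 2 * xi + 2 * delta * xi - delta) * S <= N.
  clearbody S N; lra.
have hD2 : 0 < 2 * delta * (2 + 2 * xi + 2 * delta * xi - delta).
  by rewrite !mulr_gt0.
rewrite ler_pdivlMr; last by rewrite !mulr_gt0.
rewrite (_ : K%:R^-1 * S * (2 * delta * K%:R * (2 + 2 * xi + 2 * delta * xi - delta))
   = 2 * delta * (2 + 2 * xi + 2 * delta * xi - delta) * S) //.
field; by rewrite pnatr_eq0 -lt0n.
Qed.

End Alg.

Lemma eig_ge0 (R : realType) m n (A : 'M[R]_(m, n)) a : eigenvalue (A^T *m A) a -> 0 <= a.
Proof.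
case/eigenvalueP => v hv nz.
have e : (v *m (A^T *m A) *m v^T) 0 0 = (a *: v *m v^T) 0 0 by rewrite hv.
have e2 : v *m (A^T *m A) *m v^T = (v *m A^T) *m (v *m A^T)^T.
  by rewrite mulmxA -mulmxA trmx_mul trmxK.
rewrite e2 -scalemxAl [in RHS]mxE !mxE in e.
set s := \sum_j _ in e; set t := \sum_j _ in e.
have ht : 0 <= s by apply: sumr_ge0 => j _; rewrite !mxE -expr2 sqr_ge0.
have hs : 0 <= t by apply: sumr_ge0 => j _; rewrite !mxE -expr2 sqr_ge0.
case: (lerP 0 a) => // ha; exfalso.
have t0 : t = 0.
  apply/eqP; rewrite eq_le hs andbT.
  clearbody s t; nra.
move/negP: nz; apply; apply/eqP/matrixP => i j; rewrite (ord1 i) mxE.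
have h0 : forall k : 'I_n, true -> 0 <= v 0 k * v^T k 0.
  by move=> k _; rewrite mxE -expr2 sqr_ge0.
have := @psumr_eq0P _ _ _ (fun j => v 0 j * v^T j 0) h0 t0 j isT.
by rewrite mxE => /eqP; rewrite mulf_eq0 orbb => /eqP.
Qed.

Lemma lmax_ge0 (R : realType) m n (A : 'M[R]_(m, n)) : 0 <= lmax A.
Proof.
rewrite /lmax; case: (pselect (has_sup [set a : R | eigenvalue (A^T *m A) a])) => hs.
  case: (hs) => -[a0 Ha0] _.
  exact: le_trans (eig_ge0 Ha0) (sup_upper_bound hs Ha0).
by rewrite sup_out.
Qed.

Lemma mu2_ge0 (R : realType) m n (A : 'M[R]_(m, n)) beta : 0 <= mu2 A beta.
Proof.
rewrite /mu2 le_min ler01 /=; apply: mulr_ge0; last exact: lmax_ge0.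
by apply: divr_ge0; rewrite ler0n.
Qed.

Lemma ns_scale (R : realType) n (x p : 'cV[R]_n) (xi : R) :
  ns (x + xi *: x - (1 + xi) *: p) = (1 + xi) ^+ 2 * ns (x - p).
Proof.
rewrite /ns mulr_sumr; apply: eq_bigr => j _; rewrite !mxE; ring.
Qed.

Lemma enorm_sq (R : realType) n (v : 'cV[R]_n) : enorm v ^+ 2 = ns v.
Proof. by rewrite /enorm sqr_sqrtr // ns_ge0. Qed.

Lemma enorm_ge0 (R : realType) n (v : 'cV[R]_n) : 0 <= enorm v.
Proof. exact: sqrtr_ge0. Qed.

Unset Implicit Arguments.

Theorem theorem5 (R : realType) (m n : nat) (A : 'M[R]_(m, n)) (b : 'cV[R]_m)
  (beta : nat) (sel : {set 'I_m} -> 'cV[R]_n -> 'I_m)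
  (xi delta : R) (x0 : 'cV[R]_n) (k : nat) :
  (forall i : 'I_m, \sum_j (A i j) ^+ 2 = 1) ->
  (exists y : 'cV[R]_n, forall i, (A *m y) i 0 <= b i 0) ->
  (1 <= beta <= m)%N ->
  is_argmax_sel A b beta sel ->
  -1 < xi -> xi <= 0 ->
  0 < delta -> delta < 2 * (1 + xi) / (1 - 2 * xi) ->
  (1 <= k)%N ->
  Eseq beta k (fun s => fobj A b beta sel (xbar A b sel xi delta x0 s k))
  <= ((1 + xi) * (1 + xi - 2 * delta * xi * mu2 A beta) * (distP A b x0) ^+ 2
      + 2 * xi * delta * (delta * xi - delta - 1) * fobj A b beta sel x0)
     / (2 * delta * k%:R * (2 + 2 * xi + 2 * delta * xi - delta)).
Proof.
move=> Anorm [y hy] /andP[hb1 hbm] hsel hxi hxi0 hd hdel hk.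
have hD : 0 < 2 + 2 * xi + 2 * delta * xi - delta.
  have h12 : 0 < 1 - 2 * xi by lra.
  move: hdel; rewrite ltr_pdivlMr // => h; lra.
have hK : 0 < k%:R :> R by rewrite ltr0n.
have hDk : 0 < 2 * delta * k%:R * (2 + 2 * xi + 2 * delta * xi - delta) by rewrite !mulr_gt0.
set f0 := fobj A b beta sel x0.
set L := Eseq beta k _.
set Dk := 2 * delta * k%:R * _ in hDk *.
set c := (- 2 * delta * xi) * (1 - delta) * f0.
have key : forall p : 'cV[R]_n, (forall i, (A *m p) i 0 <= b i 0) ->
    L * Dk - c <= (1 + xi) ^+ 2 * ns (x0 - p).
  move=> p hp; have := main_bound Anorm hxi hxi0 hd hp hsel x0 hbm hk hD.
  rewrite -/L -/Dk -/f0 -/c ler_pdivlMr // /Wf /= ns_scale => h.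
  clearbody L Dk c; lra.
set d := distP A b x0.
have hxi1 : 0 < 1 + xi by lra.
have hq : L * Dk - c <= (1 + xi) ^+ 2 * d ^+ 2.
  case: (lerP (L * Dk - c) 0) => hq0.
    apply: le_trans hq0 _; apply: mulr_ge0; exact: sqr_ge0.
  set q := L * Dk - c in key hq0 *.
  set u := Num.sqrt q / (1 + xi).
  have hu0 : 0 <= u by apply: divr_ge0; [exact: sqrtr_ge0 | exact: ltW].
  have hu2 : u ^+ 2 = q / (1 + xi) ^+ 2.
    by rewrite /u exprMn sqr_sqrtr ?ltW // exprVn.
  have hud : u <= d.
    apply: lb_le_inf; first by exists (enorm (x0 - y)); exists y.
    move=> t [p hp <-].
    rewrite -ler_sqr ?nnegrE ?enorm_ge0 // hu2 enorm_sq ler_pdivrMr ?exprn_gt0 //.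
    by rewrite mulrC; apply: key.
  have hd0 : 0 <= d by exact: le_trans hu0 hud.
  have : u ^+ 2 <= d ^+ 2 by rewrite ler_sqr ?nnegrE.
  rewrite hu2 ler_pdivrMr ?exprn_gt0 // mulrC //.
rewrite ler_pdivlMr //.
have hmu := mu2_ge0 A beta.
have hf0 : 0 <= f0 by exact: fobj_ge0.
have h1 : 0 <= (- xi) * delta * (1 + xi) * mu2 A beta * d ^+ 2.
  have hnx : 0 <= - xi by lra.
  apply: mulr_ge0; last exact: sqr_ge0.
  apply: mulr_ge0 => //; apply: mulr_ge0; last exact: ltW.
  exact: mulr_ge0 hnx (ltW hd).
have h2 : 0 <= delta ^+ 2 * (xi * (xi - 2)) * f0.
  apply: mulr_ge0 => //; apply: mulr_ge0; first exact: sqr_ge0.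
  have hx2 : 0 <= xi * (xi - 2) by nra.
  exact: hx2.
clearbody L Dk d f0; rewrite /c in hq; lra.
Qed.
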